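(* There is an absolute constant $C$ such that for all integers $n,k,d\ge1$, the function $\textsc{Word}_{S_n,k}$ is computed by $S_n^{k-1}$-invariant $\Sigma_{d+1}$ and $\Pi_{d+1}$ formulas of size at most $n^{C\,d\,k^{1/d}}$. In particular, $\textsc{Word}_{S_n,k}$ has $S_n^{k-1}$-invariant $\mathsf{AC}$ formulas of size $n^{O(\log k)}$ and depth $O(\log k)$.
   Context: $\textsc{Word}_{S_n,k}:\overline{S_n}^k\subseteq\{0,1\}^{kn^2}\to\{0,1\}$ maps a $k$-tuple of $n\times n$ permutation matrices to the $(1,1)$-entry of their product; the variables are the entries $M_{i,a,b}$. $S_n^{k-1}$ acts on variables by $(g_1,\dots,g_{k-1})\cdot M_{i,a,b}=M_{i,g_{i-1}(a),g_i(b)}$ with $g_0=g_k=1$. $\mathsf{AC}$ formulas are rooted trees with unordered children. Leaves are labeled $0,1,x_i,\neg x_i$, and gates are unbounded fan-in $\textsc{and}$/$\textsc{or}$. $\Sigma_{d+1}$ (resp. $\Pi_{d+1}$) formulas are those of depth at most $d+1$ with output gate $\textsc{or}$ (resp. $\textsc{and}$). Size is the number of literal leaves. $P$-invariance means invariance of the labeled tree under relabeling literals by every $\pi\in P$. *)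

(* Defs.v *)
From HB Require Import structures.
From mathcomp Require Import all_boot all_order all_algebra all_fingroup.
From Stdlib Require Import List Permutation.
From Stdlib Require Reals.

Set Implicit Arguments.
Unset Strict Implicit.
Unset Printing Implicit Defensive.

Inductive gate := GAnd | GOr.

Inductive formula (V : Type) : Type :=
| FConst : bool -> formula V
| FLit : bool -> V -> formula V
| FGate : gate -> list (formula V) -> formula V.

Arguments FConst {V} b.
Arguments FLit {V} b v.
Arguments FGate {V} g l.

Fixpoint eval {V : Type} (x : V -> bool) (F : formula V) : bool :=
  match F with
  | FConst b => b
  | FLit true v => x v
  | FLit false v => ~~ x v
  | FGate GAnd l => (fix ev l := match l with nil => true | G :: l' => eval x G && ev l' end) l
  | FGate GOr l => (fix ev l := match l with nil => false | G :: l' => eval x G || ev l' end) l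
  end.

Fixpoint fsize {V : Type} (F : formula V) : nat :=
  match F with
  | FConst _ => 0
  | FLit _ _ => 1
  | FGate _ l => (fix sz l := match l with nil => 0 | G :: l' => fsize G + sz l' end) l
  end.

Fixpoint fdepth {V : Type} (F : formula V) : nat :=
  match F with
  | FConst _ => 0
  | FLit _ _ => 0
  | FGate _ l => (fix dp l := match l with nil => 0 | G :: l' => maxn (fdepth G) (dp l') end) l + 1
  end.

Fixpoint relabel {V : Type} (p : V -> V) (F : formula V) : formula V :=
  match F with
  | FConst b => FConst b
  | FLit b v => FLit b (p v)
  | FGate g l => FGate g (List.map (relabel p) l)
  end.

(* equality of labeled rooted trees with unordered children *)
Inductive tree_equiv {V : Type} : formula V -> formula V -> Prop :=
| te_const b : tree_equiv (FConst b) (FConst b)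
| te_lit b v : tree_equiv (FLit b v) (FLit b v)
| te_gate g l1 l2 l : Permutation l2 l -> Forall2 tree_equiv l1 l ->
    tree_equiv (FGate g l1) (FGate g l2).

Definition is_Sigma {V : Type} (D : nat) (F : formula V) : Prop :=
  (fdepth F <= D)%N /\ exists l, F = FGate GOr l.
Definition is_Pi {V : Type} (D : nat) (F : formula V) : Prop :=
  (fdepth F <= D)%N /\ exists l, F = FGate GAnd l.

(* Word_{S_n,k}.  Variables M_{i,a,b}: i : 'I_k (the paper's index i+1), *)
(* a, b : 'I_n (the paper's a+1, b+1).                                *)
Local Open Scope ring_scope.

Definition wvar (n k : nat) : finType := ('I_k * 'I_n * 'I_n)%type.

Definition wmat (n k : nat) (x : wvar n k -> bool) (i : 'I_k) : 'M[int]_n :=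
  \matrix_(a < n, b < n) Posz (x (i, a, b) : nat).

Definition word_domain (n k : nat) (x : wvar n k -> bool) : Prop :=
  forall i : 'I_k, is_perm_mx (wmat x i).

Definition entry11 (n : nat) : 'M[int]_n -> int :=
  match n as m return 'M[int]_m -> int with
  | 0 => fun _ => 0
  | m.+1 => fun A => A ord0 ord0
  end.

Definition wprod (n k : nat) (x : wvar n k -> bool) : 'M[int]_n :=
  \big[mulmx/1%:M]_(i < k) wmat x i.

Definition word (n k : nat) (x : wvar n k -> bool) : bool :=
  entry11 (wprod x) == 1.

Definition computes_word (n k : nat) (F : formula (wvar n k)) : Prop :=
  forall x : wvar n k -> bool, word_domain x -> eval x F = word x.

(* The action of S_n^{k-1}: g : 'I_(k-1) -> 'S_n; g_j for j = 0..k, with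
   g_0 = g_k = 1 and g_j = g (j-1) for 1 <= j <= k-1. *)
Definition gext (n k : nat) (g : 'I_k.-1 -> {perm 'I_n}) (j : nat) : {perm 'I_n} :=
  match j with
  | 0 => 1%g
  | j'.+1 => match insub j' with Some o => g o | None => 1%g end
  end.

(* (g_1..g_{k-1}) . M_{i,a,b} = M_{i, g_{i-1}(a), g_i(b)}  (paper indices) *)
Definition gact (n k : nat) (g : 'I_k.-1 -> {perm 'I_n}) (v : wvar n k) : wvar n k :=
  let: (i, a, b) := v in (i, gext g i a, gext g i.+1 b).

Definition word_invariant (n k : nat) (F : formula (wvar n k)) : Prop :=
  forall g : 'I_k.-1 -> {perm 'I_n}, tree_equiv (relabel (gact g) F) F.

(* Main.v *)
Require Import Defs.
From Stdlib Require Import Reals Lra Lia Psatz.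
From Stdlib Require Import List Permutation.

Local Open Scope R_scope.

Definition C12 : R := 12.

Lemma Rpower_pos x y : 0 < Rpower x y.
Proof. unfold Rpower; apply exp_pos. Qed.

Lemma INR_ge1 k : (1 <= k)%nat -> 1 <= INR k.
Proof. intro h; apply (le_INR 1 k) in h; simpl in h; lra. Qed.

Lemma real_bound1 (n t d k m : nat) :
  (2 <= n)%nat -> (1 <= t)%nat -> (1 <= d)%nat -> (1 <= k)%nat ->
  (t = 1%nat \/ INR (Nat.sub t 1) ^ d < INR k) ->
  INR m <= INR n ^ (Nat.mul (Nat.add t t) d) ->
  forall C, 4 <= C ->
  INR m <= Rpower (INR n) (C * INR d * Rpower (INR k) (/ INR d)).
Proof.
intros hn ht hd hk hmin hm C hC.
assert (Hn : 2 <= INR n) by (apply (le_INR 2 n) in hn; simpl in hn; lra).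
assert (Hd : 1 <= INR d) by (apply INR_ge1; lia).
assert (Hk : 1 <= INR k) by (apply INR_ge1; lia).
set (r := Rpower (INR k) (/ INR d)).
assert (Hr1 : 1 <= r).
{ unfold r. rewrite <- (Rpower_O (INR k)) by lra. apply Rle_Rpower; [lra|].
  left; apply Rinv_0_lt_compat; lra. }
assert (Hrd : r ^ d = INR k).
{ unfold r. rewrite <- Rpower_pow by (apply Rpower_pos).
  rewrite Rpower_mult. rewrite Rinv_l by lra. apply Rpower_1; lra. }
assert (Ht : INR t <= r + 1).
{ destruct hmin as [-> | hlt].
  - simpl; lra.
  - destruct (Rle_or_lt (INR (Nat.sub t 1)) r) as [hle | hgt].
    + rewrite minus_INR in hle by lia. simpl in hle. lra.
    + exfalso.
      assert (r ^ d <= INR (Nat.sub t 1) ^ d) by (apply pow_incr; lra).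
      lra. }
apply Rle_trans with (1 := hm).
rewrite <- Rpower_pow by lra.
apply Rle_Rpower; [lra|].
rewrite mult_INR, plus_INR.
assert (0 <= INR d) by lra.
assert (INR t + INR t <= C * r) by nra.
nra.
Qed.

Lemma real_bound2 (n d k m : nat) :
  (2 <= n)%nat -> (1 <= d)%nat -> (2 <= k)%nat ->
  INR 2 ^ (Nat.sub d 1) < INR k ->
  INR m <= INR n ^ (Nat.mul 3 d) ->
  INR (S d) <= 12 * ln (INR k) /\
  INR m <= Rpower (INR n) (12 * ln (INR k)).
Proof.
intros hn hd hk hlt hm.
assert (Hn : 2 <= INR n) by (apply (le_INR 2 n) in hn; simpl in hn; lra).
assert (Hk : 2 <= INR k) by (apply (le_INR 2 k) in hk; simpl in hk; lra).
assert (Hl2 := ln_lt_2).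
assert (Hlk : ln 2 <= ln (INR k)).
{ destruct (Req_dec (INR k) 2) as [e|ne]; [rewrite e; lra|].
  left; apply ln_increasing; lra. }
assert (Hd : INR (Nat.sub d 1) * ln 2 < ln (INR k)).
{ rewrite <- ln_pow by lra. apply ln_increasing; [apply pow_lt; lra | exact hlt]. }
rewrite minus_INR in Hd by lia. simpl in Hd.
assert (HD : INR d < 4 * ln (INR k)).
{ assert (INR d - 1 < 2 * ln (INR k)).
  { destruct (Rle_or_lt (INR d - 1) 0); [lra|]. nra. }
  lra. }
split.
- rewrite S_INR. lra.
- apply Rle_trans with (1 := hm).
  rewrite <- Rpower_pow by lra.
  apply Rle_Rpower; [lra|].
  rewrite mult_INR. simpl. lra.
Qed.

Lemma real_bound1' (n t d k m : nat) :
  (2 <= n)%nat -> (1 <= t)%nat -> (1 <= d)%nat -> (1 <= k)%nat ->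
  (t = 1%nat \/ INR (Nat.sub t 1) ^ d < INR k) ->
  INR m <= INR n ^ (Nat.mul (Nat.add t t) d) ->
  INR m <= Rpower (INR n) (C12 * INR d * Rpower (INR k) (/ INR d)).
Proof. intros; apply real_bound1 with t; auto. unfold C12; lra. Qed.

Lemma real_bound2' (n d k m : nat) :
  (2 <= n)%nat -> (1 <= d)%nat -> (2 <= k)%nat ->
  INR 2 ^ (Nat.sub d 1) < INR k ->
  INR m <= INR n ^ (Nat.mul 3 d) ->
  INR (S d) <= C12 * ln (INR k) /\
  INR m <= Rpower (INR n) (C12 * ln (INR k)).
Proof. unfold C12; apply real_bound2. Qed.

Lemma size0_ok a b : INR 0 <= Rpower a b.
Proof. simpl; left; apply Rpower_pos. Qed.

Lemma k1_ok n : (1 <= n)%nat ->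
  INR 0 <= C12 * ln (INR 1) /\ INR 1 <= Rpower (INR n) (C12 * ln (INR 1)).
Proof.
intros hn. simpl. rewrite ln_1, Rmult_0_r. split; [lra|].
rewrite Rpower_O; [lra|]. apply (lt_INR 0 n) in hn; simpl in hn; lra.
Qed.

Lemma depth1_ok k : (2 <= k)%nat -> INR 1 <= C12 * ln (INR k).
Proof.
intros hk. assert (Hk : 2 <= INR k) by (apply (le_INR 2 k) in hk; simpl in hk; lra).
assert (Hl2 := ln_lt_2).
assert (Hlk : ln 2 <= ln (INR k)).
{ destruct (Req_dec (INR k) 2) as [e|ne]; [rewrite e; lra|].
  left; apply ln_increasing; lra. }
unfold C12; simpl; lra.
Qed.

Lemma INR_le_pow (m b E : nat) : (m <= Nat.pow b E)%nat -> INR m <= INR b ^ E.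
Proof. intro h; rewrite <- pow_INR; apply le_INR; exact h. Qed.

Lemma INR_lt_pow (m b E : nat) : (Nat.pow b E < m)%nat -> INR b ^ E < INR m.
Proof. intro h; rewrite <- pow_INR; apply lt_INR; exact h. Qed.

Lemma INR_le_nat (m p : nat) : (m <= p)%nat -> INR m <= INR p.
Proof. apply le_INR. Qed.

Local Close Scope R_scope.
From mathcomp Require Import all_boot all_order all_algebra all_fingroup.
Require Import Defs.
Set Implicit Arguments.
Unset Strict Implicit.
Unset Printing Implicit Defensive.

Lemma all_flatten' (T : Type) (p : pred T) (L : seq (seq T)) :
  all p (flatten L) = all (all p) L.
Proof. by elim: L => //= l L <-; rewrite all_cat. Qed.

Lemma has_flatten' (T : Type) (p : pred T) (L : seq (seq T)) :
  has p (flatten L) = has (has p) L.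
Proof. by elim: L => //= l L <-; rewrite has_cat. Qed.

Lemma has_filter' (T : Type) (p a : pred T) (L : seq T) :
  has p (filter a L) = has (fun c => a c && p c) L.
Proof. by elim: L => //= c L IH; case: (a c) => //=; rewrite IH. Qed.

Lemma all_filter' (T : Type) (p a : pred T) (L : seq T) :
  all p (filter a L) = all (fun c => a c ==> p c) L.
Proof. by elim: L => //= c L IH; case: (a c) => //=; rewrite IH. Qed.

Fixpoint W (n : nat) (f : nat -> 'I_n -> 'I_n) (lo len : nat) (a : 'I_n) : 'I_n :=
  match len with 0 => a | len'.+1 => W f lo.+1 len' (f lo a) end.

Lemma W_add n (f : nat -> 'I_n -> 'I_n) lo m1 m2 a :
  W f lo (m1 + m2) a = W f (lo + m1) m2 (W f lo m1 a).
Proof.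
elim: m1 lo a => [|m1 IH] lo a /=; first by rewrite addn0.
by rewrite IH addSnnS.
Qed.

Definition prevc (n t' : nat) (a : 'I_n) (c : {ffun 'I_t'.+1 -> 'I_n}) (j : 'I_t'.+1) : 'I_n :=
  if val j is j'.+1 then c (inord j') else a.

Definition cstar (n t' : nat) (f : nat -> 'I_n -> 'I_n) lo q a : {ffun 'I_t'.+1 -> 'I_n} :=
  [ffun j : 'I_t'.+1 => W f lo (j.+1 * q) a].

Lemma path_char n t' (f : nat -> 'I_n -> 'I_n) lo q a (c : {ffun 'I_t'.+1 -> 'I_n}) :
  all (fun j : 'I_t'.+1 => W f (lo + j * q) q (prevc a c j) == c j) (enum 'I_t'.+1)
  = (c == cstar t' f lo q a).
Proof.
have prev_star : forall j : 'I_t'.+1, prevc a (cstar t' f lo q a) j = W f lo (j * q) a.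
  case=> [[|j] hj] //=.
  by rewrite /prevc /cstar /= ffunE inordK //; apply: ltnW.
apply/allP/eqP => [h | ->].
  have key : forall m (hm : m < t'.+1), c (Ordinal hm) = W f lo (m.+1 * q) a.
    elim=> [|m IH] hm.
      have /eqP <- := h (Ordinal hm) (mem_enum _ _).
      by rewrite /prevc /= mul0n addn0 mul1n.
    have /eqP <- := h (Ordinal hm) (mem_enum _ _).
    rewrite /prevc /=.
    have hm' : m < t'.+1 by exact: ltnW.
    have -> : (inord m : 'I_t'.+1) = Ordinal hm' by apply: val_inj; rewrite /= inordK.
    by rewrite IH -W_add mulSn addnC.
  by apply/ffunP => -[m hm]; rewrite key /cstar ffunE.
move=> j _; rewrite prev_star -W_add /cstar ffunE.
by rewrite mulSn addnC.
Qed.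

Definition cands n t' (b : 'I_n) (s pol : bool) : seq {ffun 'I_t'.+1 -> 'I_n} :=
  filter (fun c : {ffun 'I_t'.+1 -> 'I_n} => ((c ord_max == b) == s) == pol) (enum {ffun 'I_t'.+1 -> 'I_n}).

Fixpoint body (n k' t' : nat) (e : nat) (pol : bool) (lo : nat) (a b : 'I_n) (s : bool)
  : seq (formula (wvar n k'.+1)) :=
  match e with
  | 0 => if (lo < k'.+1)%N then [:: FLit s ((inord lo : 'I_k'.+1), a, b)]
         else [:: FConst ((a == b) == s)]
  | e'.+1 => [seq FGate (if pol then GAnd else GOr)
      (flatten [seq body k' t' e' (~~ pol) (lo + j * t'.+1 ^ e') (prevc a c j) (c j) pol
                 | j : 'I_t'.+1 <- enum 'I_t'.+1])
     | c : {ffun 'I_t'.+1 -> 'I_n} <- cands t' b s pol]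
  end.

Lemma eval_or (V : Type) (x : V -> bool) (L : seq (formula V)) :
  eval x (FGate GOr L) = has (eval x) L.
Proof. by elim: L => //= F L ->. Qed.

Lemma eval_and (V : Type) (x : V -> bool) (L : seq (formula V)) :
  eval x (FGate GAnd L) = all (eval x) L.
Proof. by elim: L => //= F L ->. Qed.

Definition evb (V : Type) (x : V -> bool) (pol : bool) (L : seq (formula V)) :=
  if pol then has (eval x) L else all (eval x) L.

Lemma body_eval n k' t' (x : wvar n k'.+1 -> bool) (f : nat -> 'I_n -> 'I_n)
  (Hf : forall lo a b, (lo < k'.+1)%N -> x ((inord lo : 'I_k'.+1), a, b) = (f lo a == b))
  (Hid : forall lo a, (k'.+1 <= lo)%N -> f lo a = a) e :
  forall pol lo a b s,
  evb x pol (body k' t' e pol lo a b s) = ((W f lo (t'.+1 ^ e) a == b) == s).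
Proof.
elim: e => [|e IH] pol lo a b s.
  rewrite /= ?expn0.
  case: ltnP => hlo.
    by case: pol; case: s; rewrite /evb /= ?orbF ?andbT Hf //; case: (f lo a == b).
  by rewrite Hid // /evb; case: pol => /=; rewrite ?orbF ?andbT.
rewrite /= /evb /cands.
set q := t'.+1 ^ e.
have Hin : forall c : {ffun 'I_t'.+1 -> 'I_n},
    all (fun j : 'I_t'.+1 => W f (lo + j * q) q (prevc a c j) == c j) (enum 'I_t'.+1)
    = (c == cstar t' f lo q a) by move=> c; exact: path_char.
have Hlast : cstar t' f lo q a ord_max = W f lo (t'.+1 ^ e.+1) a.
  by rewrite /cstar ffunE expnS.
case: pol.
  rewrite has_map has_filter'.
  apply/hasP/idP => [[c _ /andP[hP]] | hP].
    change (eval x (FGate GAnd (flatten [seq body k' t' e false (lo + j * q) (prevc a c j) (c j) true | j : 'I_t'.+1 <- enum 'I_t'.+1])) -> (W f lo (t'.+1 ^ e.+1) a == b) == s).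
    rewrite eval_and all_flatten' all_map.
    rewrite (eq_all (a2 := fun j : 'I_t'.+1 => W f (lo + j * q) q (prevc a c j) == c j)); last first.
      by move=> j /=; have := IH false (lo + j * q) (prevc a c j) (c j) true; rewrite /evb => ->; rewrite eqb_id.
    by rewrite Hin => /eqP hc; rewrite -Hlast -hc; move: hP; rewrite eqb_id.
  exists (cstar t' f lo q a); first exact: mem_enum.
  apply/andP; split; first by rewrite Hlast eqb_id.
  change (eval x (FGate GAnd (flatten [seq body k' t' e false (lo + j * q) (prevc a (cstar t' f lo q a) j) (cstar t' f lo q a j) true | j : 'I_t'.+1 <- enum 'I_t'.+1]))).
  rewrite eval_and all_flatten' all_map.
  rewrite (eq_all (a2 := fun j : 'I_t'.+1 => W f (lo + j * q) q (prevc a (cstar t' f lo q a) j) == (cstar t' f lo q a) j)).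
    by rewrite Hin.
  by move=> j /=; have := IH false (lo + j * q) (prevc a _ j) (_ j) true; rewrite /evb => ->; rewrite eqb_id.
rewrite all_map all_filter'.
apply/allP/idP => [h | hP c _].
  have := h (cstar t' f lo q a) (mem_enum _ _).
  rewrite Hlast; case: ((W f lo (t'.+1 ^ e.+1) a == b) == s) => //; move=> /implyP /(_ isT).
  change (eval x (FGate GOr (flatten [seq body k' t' e true (lo + j * q) (prevc a (cstar t' f lo q a) j) (cstar t' f lo q a j) false | j : 'I_t'.+1 <- enum 'I_t'.+1])) -> false).
  rewrite eval_or has_flatten' has_map.
  rewrite (eq_has (a2 := fun j : 'I_t'.+1 => ~~ (W f (lo + j * q) q (prevc a (cstar t' f lo q a) j) == (cstar t' f lo q a) j))).
    by rewrite has_predC Hin eqxx.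
  by move=> j /=; have := IH true (lo + j * q) (prevc a _ j) (_ j) false; rewrite /evb => ->; rewrite eqbF_neg.
apply/implyP => hc.
change (eval x (FGate GOr (flatten [seq body k' t' e true (lo + j * q) (prevc a c j) (c j) false | j : 'I_t'.+1 <- enum 'I_t'.+1]))).
rewrite eval_or has_flatten' has_map.
rewrite (eq_has (a2 := fun j : 'I_t'.+1 => ~~ (W f (lo + j * q) q (prevc a c j) == c j))).
  rewrite has_predC Hin; apply/eqP => hcs; move: hc; rewrite hcs Hlast hP.
  by [].
by move=> j /=; have := IH true (lo + j * q) (prevc a _ j) (_ j) false; rewrite /evb => ->; rewrite eqbF_neg.
Qed.


Lemma fsize_gate (V : Type) g (L : seq (formula V)) :
  fsize (FGate g L) = sumn (map fsize L).
Proof. by elim: L => //= F L ->. Qed.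

Lemma fdepth_gate (V : Type) g (L : seq (formula V)) D :
  all (fun F => fdepth F <= D)%N L -> (fdepth (FGate g L) <= D.+1)%N.
Proof.
elim: L => //= F L IH /andP[h1 h2].
have := IH h2; rewrite /= addn1 ltnS => h3.
by rewrite addn1 ltnS geq_max h1 h3.
Qed.

Lemma perm_eq_Permutation (T : eqType) (s t : seq T) :
  perm_eq s t -> Permutation s t.
Proof.
elim: s t => [|x s IH] t.
  by rewrite perm_sym => /perm_nilP ->.
move=> hp.
have hx: x \in t by rewrite -(perm_mem hp) mem_head.
move: hp; case/splitPr: hx => t1 t2 hp.
have hp' : perm_eq s (t1 ++ t2).
  rewrite -(perm_cons x); apply: (perm_trans hp).
  by rewrite -cat1s perm_catCA.
by apply: Permutation_cons_app; apply: IH.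
Qed.

Definition BR (V : Type) (L1 L2 : seq (formula V)) :=
  exists l, Permutation L2 l /\ Forall2 tree_equiv L1 l.

Lemma BR_cat (V : Type) (A1 A2 B1 B2 : seq (formula V)) :
  BR A1 B1 -> BR A2 B2 -> BR (A1 ++ A2) (B1 ++ B2).
Proof.
move=> [l1 [p1 f1]] [l2 [p2 f2]]; exists (l1 ++ l2); split.
  exact: Permutation_app.
exact: Forall2_app.
Qed.

Lemma BR_flatten (V I : Type) (F G : I -> seq (formula V)) (js : seq I) :
  (forall j, BR (F j) (G j)) -> BR (flatten (map F js)) (flatten (map G js)).
Proof.
move=> h; elim: js => [|j js IH] /=.
  by exists [::]; split; constructor.
exact: BR_cat.
Qed.

Lemma Forall2_map (V I : Type) (R : V -> V -> Prop) (f g : I -> V) (L : seq I) :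
  (forall c, R (f c) (g c)) -> Forall2 R (map f L) (map g L).
Proof. by move=> h; elim: L => [|c L IH] /=; constructor. Qed.

Lemma map_relabel_flatten (V : Type) (p : V -> V) (L : seq (seq (formula V))) :
  List.map (relabel p) (flatten L) = flatten (map (List.map (relabel p)) L).
Proof.
elim: L => //= l L <-. by rewrite List.map_app.
Qed.

Lemma map_List (A B : Type) (f : A -> B) (l : seq A) : List.map f l = map f l.
Proof. by elim: l => //= x l ->. Qed.

Lemma BR_gate (V : Type) G (L1 L2 : seq (formula V)) :
  BR L1 L2 -> tree_equiv (FGate G L1) (FGate G L2).
Proof. by move=> [l [p f]]; apply: te_gate p f. Qed.

Lemma gext_big n k (g : 'I_k.-1 -> {perm 'I_n}) j : (k <= j)%N -> gext g j = 1%g.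
Proof.
case: j => [|j] //= hj.
by rewrite insubN //= -leqNgt -subn1 leq_subLR add1n.
Qed.

Lemma body_equiv n k' t' (g : 'I_k'.+1.-1 -> {perm 'I_n}) e :
  forall pol lo a b s,
  BR (map (relabel (gact g)) (body k' t' e pol lo a b s))
     (body k' t' e pol lo (gext g lo a) (gext g (lo + t'.+1 ^ e) b) s).
Proof.
elim: e => [|e IH] pol lo a b s.
  rewrite /= ?expn0 addn1.
  case: ltnP => hlo.
    rewrite /= inordK //.
    exists [:: FLit s ((inord lo : 'I_k'.+1), gext g lo a, gext g lo.+1 b)]; split.
      exact: Permutation_refl.
    by constructor; constructor.
  rewrite (gext_big g hlo) (gext_big g (leq_trans hlo (leqnSn lo))) ?perm1 //=.
  exists [:: FConst ((a == b) == s)]; split; first exact: Permutation_refl.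
  by constructor; constructor.
set q := t'.+1 ^ e.
set a' := gext g lo a; set b' := gext g (lo + t'.+1 ^ e.+1) b.
pose h (c : {ffun 'I_t'.+1 -> 'I_n}) : {ffun 'I_t'.+1 -> 'I_n} :=
  [ffun j : 'I_t'.+1 => gext g (lo + j.+1 * q) (c j)].
have hinj : injective h.
  move=> c1 c2 /ffunP hc; apply/ffunP => j; have := hc j; rewrite !ffunE.
  exact: perm_inj.
set T' := fun c : {ffun 'I_t'.+1 -> 'I_n} => FGate (if pol then GAnd else GOr)
      (flatten [seq body k' t' e (~~ pol) (lo + j * q) (prevc a' c j) (c j) pol
                 | j : 'I_t'.+1 <- enum 'I_t'.+1]).
exists (map (T' \o h) (cands t' b s pol)); split.
  rewrite map_comp -!map_List; apply: Permutation_map.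
  apply: perm_eq_Permutation.
  rewrite /cands map_List.
  have -> : map h (filter (fun c : {ffun 'I_t'.+1 -> 'I_n} => ((c ord_max == b) == s) == pol)
                  (enum {ffun 'I_t'.+1 -> 'I_n}))
          = filter (fun c : {ffun 'I_t'.+1 -> 'I_n} => ((c ord_max == b') == s) == pol)
                  (map h (enum {ffun 'I_t'.+1 -> 'I_n})).
    rewrite [RHS]filter_map; congr map; apply: eq_filter => c /=.
    rewrite /h ffunE /b' /q -expnS.
    by rewrite (inj_eq perm_inj).
  apply: perm_filter.
  apply: uniq_perm; first exact: enum_uniq.
    by rewrite map_inj_uniq // enum_uniq.
  move=> c; rewrite mem_enum; symmetry; apply/mapP.
  have [hi hK Kh] := injF_bij hinj.
  by exists (hi c); rewrite ?mem_enum ?Kh.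
rewrite -map_comp.
apply: Forall2_map => c /=.
rewrite map_List.
apply: BR_gate.
rewrite -map_List map_relabel_flatten -!map_comp.
apply: BR_flatten => j /=.
rewrite map_List.
have -> : prevc a' (h c) j = gext g (lo + j * q) (prevc a c j).
  case: j => [[|j] hj] /=; first by rewrite mul0n addn0.
  by rewrite /prevc /= /h ffunE inordK // ltnW.
have -> : h c j = gext g ((lo + j * q) + q) (c j).
  by rewrite /h ffunE mulSn [q + _]addnC addnA.
exact: IH.
Qed.

Lemma body_depth n k' t' e : forall pol lo (a b : 'I_n) s,
  all (fun F => fdepth F <= e)%N (body k' t' e pol lo a b s).
Proof.
elim: e => [|e IH] pol lo a b s.
  by rewrite /=; case: ifP.
rewrite /= all_map; apply/allP => c _ /=.
apply: (fdepth_gate GAnd).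
rewrite all_flatten' all_map; apply/allP => j _ /=.
exact: IH.
Qed.

Lemma sumn_le_all (T : Type) (F : T -> nat) B (L : seq T) :
  (forall x, F x <= B)%N -> (sumn (map F L) <= size L * B)%N.
Proof.
move=> h; elim: L => //= x L IH.
by rewrite mulSn leq_add.
Qed.

Lemma body_size n k' t' e : forall pol lo (a b : 'I_n) s,
  (sumn (map fsize (body k' t' e pol lo a b s)) <= (t'.+1 * n ^ t'.+1) ^ e)%N.
Proof.
elim: e => [|e IH] pol lo a b s.
  by rewrite /=; case: ifP.
rewrite /= -map_comp.
apply: (leq_trans (sumn_le_all _ _ (B := t'.+1 * (t'.+1 * n ^ t'.+1) ^ e))).
  move=> c; rewrite [(_ \o _) c]/comp (fsize_gate (if pol then GAnd else GOr)) map_flatten sumn_flatten -map_comp.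
  have := @sumn_le_all _ (fun j : 'I_t'.+1 => sumn (map fsize (body k' t' e (~~ pol) (lo + j * t'.+1 ^ e) (prevc a c j) (c j) pol))) ((t'.+1 * n ^ t'.+1) ^ e) (enum 'I_t'.+1).
  rewrite size_enum_ord -map_comp; apply => j; exact: IH.
rewrite [(_ * _) ^ e.+1]expnS -mulnA mulnCA leq_pmul2l // leq_mul2r.
apply/orP; right.
rewrite /cands size_filter (leq_trans (count_size _ _)) //.
by rewrite -cardE card_ffun !card_ord.
Qed.

Lemma perm_mx_entry n (s : {perm 'I_n}) a b :
  (perm_mx s : 'M[int]_n) a b = (((s a == b) : nat)%:R)%R.
Proof. by rewrite /perm_mx !mxE. Qed.

Lemma big_perm_mx n (I : Type) (r : seq I) (F : I -> {perm 'I_n}) :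
  \big[mulmx/(1%:M)%R]_(i <- r) (perm_mx (F i) : 'M[int]_n) = perm_mx (\big[mulg/1%g]_(i <- r) F i).
Proof.
elim: r => [|i r IH]; first by rewrite !big_nil perm_mx1.
by rewrite !big_cons IH perm_mxM.
Qed.

Definition sx n k (x : wvar n k -> bool) (i : 'I_k) : {perm 'I_n} :=
  odflt 1%g [pick s | (wmat x i : 'M[int]_n) == perm_mx s].

Definition fx n k (x : wvar n k -> bool) (j : nat) (a : 'I_n) : 'I_n :=
  match (insub j : option 'I_k) with Some i => sx x i a | None => a end.

Definition fpx n k (x : wvar n k -> bool) (j : nat) : {perm 'I_n} :=
  match (insub j : option 'I_k) with Some i => sx x i | None => 1%g end.

Lemma word_sem n' k (x : wvar n'.+1 k -> bool) : word_domain x ->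
  [/\ forall (i : 'I_k) a b, x (i, a, b) = (fx x i a == b),
      forall lo a, (k <= lo)%N -> fx x lo a = a &
      word x = (W (fx x) 0 k ord0 == ord0)].
Proof.
move=> hdom.
have Hsx : forall i, wmat x i = perm_mx (sx x i).
  move=> i; rewrite /sx; case: pickP => [s /eqP -> // | H].
  by have /existsP [s hs] := hdom i; have := H s; rewrite hs.
have Hf : forall (i : 'I_k), fx x i = sx x i.
  by move=> i; rewrite /fx valK.
split.
- move=> i a b; rewrite Hf.
  have := congr1 (fun M : 'M[int]_n'.+1 => M a b) (Hsx i).
  rewrite perm_mx_entry /wmat mxE.
  by case: (x (i, a, b)); case: (sx x i a == b).
- by move=> lo a hlo; rewrite /fx insubN // -leqNgt.
rewrite /word /wprod.
rewrite (eq_bigr (fun i => perm_mx (sx x i))); last by move=> i _; exact: Hsx.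
rewrite big_perm_mx /= perm_mx_entry.
have -> : (\big[mulg/1%g]_(i < k) sx x i) = (\big[mulg/1%g]_(0 <= j < k) fpx x j).
  rewrite big_mkord; apply: eq_bigr => i _; by rewrite /fpx valK.
have -> : forall m a, (\big[mulg/1%g]_(0 <= j < m) fpx x j) a = W (fx x) 0 m a.
  elim=> [|m IH] a; first by rewrite big_geq // perm1.
  rewrite big_nat_recr // permM IH.
  have -> : W (fx x) 0 m.+1 a = W (fx x) (0 + m) 1 (W (fx x) 0 m a) by rewrite -W_add addn1.
  by rewrite /= /fpx /fx; case: insub => [i|] //; rewrite perm1.
by case: (W (fx x) 0 k ord0 == ord0).
Qed.

Lemma expn_pow a b : (a ^ b)%N = Nat.pow a b.
Proof. elim: b => [|b IH] //=; by rewrite expnS IH. Qed.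

Lemma W_idl n (f : nat -> 'I_n -> 'I_n) K :
  (forall lo a, (K <= lo)%N -> f lo a = a) ->
  forall len lo a, (K <= lo)%N -> W f lo len a = a.
Proof.
move=> h; elim=> [|len IH] lo a hlo //=.
by rewrite h // IH // (leq_trans hlo).
Qed.

Lemma W_tail n (f : nat -> 'I_n -> 'I_n) K L a :
  (forall lo a, (K <= lo)%N -> f lo a = a) -> (K <= L)%N ->
  W f 0 L a = W f 0 K a.
Proof.
move=> h hKL; rewrite -(subnKC hKL) W_add add0n.
by apply: (W_idl h).
Qed.

Lemma relabel_gate (V : Type) (p : V -> V) G L :
  relabel p (FGate G L) = FGate G (map (relabel p) L).
Proof. by rewrite /= map_List. Qed.

Lemma comp_gen n'' k' t' d pol : (k'.+1 <= t'.+1 ^ d)%N ->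
  computes_word (FGate (if pol then GOr else GAnd) (@body n''.+1 k' t' d pol 0 ord0 ord0 true)).
Proof.
move=> hk x hx.
have [H1 H2 H3] := word_sem hx.
have Hf : forall lo a b, (lo < k'.+1)%N -> x ((inord lo : 'I_k'.+1), a, b) = (fx x lo a == b).
  by move=> lo a b hlo; rewrite H1 inordK.
have := @body_eval _ _ t' x (fx x) Hf H2 d pol 0 ord0 ord0 true.
rewrite (W_tail _ H2 hk) -H3 eqb_id => <-.
by case: pol; rewrite /evb ?eval_or ?eval_and.
Qed.

Lemma inv_gen n'' k' t' d pol : (k'.+1 <= t'.+1 ^ d)%N ->
  word_invariant (FGate (if pol then GOr else GAnd) (@body n''.+1 k' t' d pol 0 ord0 ord0 true)).
Proof.
move=> hk g; rewrite relabel_gate; apply: BR_gate.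
have := @body_equiv _ _ t' g d pol 0 ord0 ord0 true.
by rewrite [gext g 0]/gext perm1 add0n (gext_big g hk) perm1.
Qed.

Lemma depth_gen n k' t' d pol G (a b : 'I_n) :
  (fdepth (FGate G (body k' t' d pol 0 a b true)) <= d.+1)%N.
Proof. apply: fdepth_gate; exact: body_depth. Qed.

Lemma size_gen n k' t' d pol G (a b : 'I_n) :
  (fsize (FGate G (body k' t' d pol 0 a b true)) <= (t'.+1 * n ^ t'.+1) ^ d)%N.
Proof. rewrite fsize_gate; exact: body_size. Qed.

Lemma const_ok n k G :
  [/\ (fdepth (FGate G [:: @FConst (wvar n k) true]) = 1)%N,
      fsize (FGate G [:: @FConst (wvar n k) true]) = 0%N &
      word_invariant (FGate G [:: @FConst (wvar n k) true])].
Proof.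
split => // g /=.
apply: (@te_gate _ _ _ _ [:: FConst true]); first exact: Permutation_refl.
by constructor; constructor.
Qed.

Lemma word1 k (x : wvar 1 k -> bool) : word_domain x -> word x = true.
Proof. by move=> hx; have [_ _ ->] := word_sem hx; rewrite (ord1 (W _ _ _ _)). Qed.

Lemma exp_mono a b d : (a <= b)%N -> (a ^ d <= b ^ d)%N.
Proof. by move=> h; elim: d => // d IH; rewrite !expnS leq_mul. Qed.

Lemma nat_bound1 n t d m : (1 < n)%N -> (m <= (t * n ^ t) ^ d)%N -> (m <= n ^ ((t + t) * d))%N.
Proof.
move=> hn hm; apply: (leq_trans hm).
rewrite expnM expnD; apply: exp_mono; rewrite leq_mul2r ltnW ?orbT //.
exact: ltn_expl.
Qed.

Lemma nat_bound2 n d m : (1 < n)%N -> (m <= (2 * n ^ 2) ^ d)%N -> (m <= n ^ (3 * d))%N.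
Proof.
move=> hn hm; apply: (leq_trans hm).
rewrite expnM; apply: exp_mono.
by rewrite (expnS n 2) leq_mul2r hn orbT.
Qed.

Theorem corollary3p2 :
  exists C : Reals.Rdefinitions.R,
    (forall n k d : nat, (1 <= n)%N -> (1 <= k)%N -> (1 <= d)%N ->
      exists F1 F2 : formula (wvar n k),
        [/\ is_Sigma d.+1 F1, is_Pi d.+1 F2,
            computes_word F1 /\ computes_word F2,
            word_invariant F1 /\ word_invariant F2 &
            let bound := Reals.Rpower.Rpower (Reals.Raxioms.INR n)
                 (Reals.Rdefinitions.Rmult (Reals.Rdefinitions.Rmult C (Reals.Raxioms.INR d))
                    (Reals.Rpower.Rpower (Reals.Raxioms.INR k)
                       (Reals.Rdefinitions.Rinv (Reals.Raxioms.INR d)))) in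
            Reals.Rdefinitions.Rle (Reals.Raxioms.INR (fsize F1)) bound /\
            Reals.Rdefinitions.Rle (Reals.Raxioms.INR (fsize F2)) bound])
    /\
    (forall n k : nat, (1 <= n)%N -> (1 <= k)%N ->
      exists F : formula (wvar n k),
        [/\ computes_word F, word_invariant F,
            Reals.Rdefinitions.Rle (Reals.Raxioms.INR (fdepth F))
              (Reals.Rdefinitions.Rmult C (Reals.Rpower.ln (Reals.Raxioms.INR k))) &
            Reals.Rdefinitions.Rle (Reals.Raxioms.INR (fsize F))
              (Reals.Rpower.Rpower (Reals.Raxioms.INR n)
                 (Reals.Rdefinitions.Rmult C (Reals.Rpower.ln (Reals.Raxioms.INR k))))]).
Proof.
exists C12; split.
  move=> n k d hn hk hd.
  case: n hn => [|[|n'']] // _; case: k hk => [|k'] // _.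
    have [d1 s1 i1] := const_ok 1 k'.+1 GOr; have [d2 s2 i2] := const_ok 1 k'.+1 GAnd.
    exists (FGate GOr [:: FConst true]), (FGate GAnd [:: FConst true]).
    split.
    - by split; [rewrite d1 | eexists].
    - by split; [rewrite d2 | eexists].
    - by split => x hx; rewrite word1.
    - by split.
    - intros bound; rewrite s1 s2; split; apply: size0_ok.
  have [t [ht1 htk htmin]] : exists t, [/\ (1 <= t)%N, (k'.+1 <= t ^ d)%N & (t = 1%N \/ (t.-1 ^ d < k'.+1)%N)].
    have hex : exists t, (0 < t) && (k'.+1 <= t ^ d).
      by exists k'.+1; rewrite ltn0Sn /= -{1}(expn1 k'.+1) leq_pexp2l.
    case: (ex_minnP hex) => t /andP[ht htk] hmin.
    exists t; split => //.
    case: t ht htk hmin => [|[|t]] // _ htk hmin; [by left | right].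
    rewrite /= ltnNge; apply/negP => h.
    by have := hmin t.+1; rewrite /= h => /(_ isT); rewrite ltnn.
  case: t ht1 htk htmin => [|t'] // _ htk htmin.
  exists (FGate GOr (body k' t' d true 0 ord0 ord0 true)), (FGate GAnd (body k' t' d false 0 ord0 ord0 true)).
  split.
  - by split; [exact: depth_gen | eexists].
  - by split; [exact: depth_gen | eexists].
  - by split; [exact: (@comp_gen n''.+1 k' t' d true htk) | exact: (@comp_gen n''.+1 k' t' d false htk)].
  - by split; [exact: (@inv_gen n''.+1 k' t' d true htk) | exact: (@inv_gen n''.+1 k' t' d false htk)].
  - intros bound.
    have hmin' : (t'.+1 = 1%nat \/ Reals.Rdefinitions.Rlt (pow (Reals.Raxioms.INR (Nat.sub t'.+1 1)) d) (Reals.Raxioms.INR k'.+1)).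
      case: htmin => [-> | h]; [by left | right].
      apply: INR_lt_pow; rewrite -expn_pow; apply/ltP. have e : forall m, Nat.sub m.+1 1 = m by case. rewrite e; exact: h.
    split; apply: (real_bound1' _ t'.+1) => //; try (apply/leP; done); try exact: hmin';
      apply: INR_le_pow; rewrite -expn_pow; apply/leP;
      rewrite (_ : Nat.mul (Nat.add t'.+1 t'.+1) d = ((t'.+1 + t'.+1) * d)%N) //;
      apply: nat_bound1 => //; exact: size_gen.
move=> n k hn hk.
case: n hn => [|n'] // _; case: k hk => [|[|k'']] // _.
  exists (FLit true (ord0, ord0, ord0)).
  have [h1 h2] := k1_ok n'.+1 (ltac:(apply/leP; done)).
  split => //.
  - move=> x hx; have [H1 H2 H3] := word_sem hx.
    by rewrite H3 /= H1.
  - move=> g /=.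
    rewrite insubN // perm1; constructor.
case: n' => [|n''].
  have [d1 s1 i1] := const_ok 1 k''.+2 GOr.
  exists (FGate GOr [:: FConst true]).
  split => //.
  - by move=> x hx; rewrite word1.
  - by rewrite d1; apply: depth1_ok; apply/leP.
  - by rewrite s1; apply: size0_ok.
have hex : exists d, (k''.+2 <= 2 ^ d)%N by exists k''.+2; apply: ltnW; exact: ltn_expl.
case: (ex_minnP hex) => d hdk hmin.
case: d hdk hmin => [|d'] // hdk hmin.
have hd' : (2 ^ d' < k''.+2)%N.
  rewrite ltnNge; apply/negP => h.
  by have := hmin d' h; rewrite ltnn.
exists (FGate GOr (body k''.+1 1 d'.+1 true 0 ord0 ord0 true)).
have hlt : Reals.Rdefinitions.Rlt (pow (Reals.Raxioms.INR 2) (Nat.sub d'.+1 1)) (Reals.Raxioms.INR k''.+2).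
  apply: INR_lt_pow; rewrite -expn_pow; apply/ltP.
  have e : forall m, Nat.sub m.+1 1 = m by case.
  by rewrite e.
have hsz : Reals.Rdefinitions.Rle (Reals.Raxioms.INR (fsize (FGate GOr (body k''.+1 1 d'.+1 true 0 (ord0 : 'I_n''.+2) ord0 true))))
       (pow (Reals.Raxioms.INR n''.+2) (Nat.mul 3 d'.+1)).
  apply: INR_le_pow; rewrite -expn_pow; apply/leP.
  rewrite (_ : Nat.mul 3 d'.+1 = (3 * d'.+1)%N) //.
  apply: nat_bound2 => //; exact: size_gen.
have [hb1 hb2] := real_bound2' n''.+2 d'.+1 k''.+2 _ (ltac:(apply/leP; done)) (ltac:(apply/leP; done)) (ltac:(apply/leP; done)) hlt hsz.
split => //.
- exact: (@comp_gen n''.+1 k''.+1 1 d'.+1 true hdk).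
- exact: (@inv_gen n''.+1 k''.+1 1 d'.+1 true hdk).
- apply: (Rle_trans _ _ _ _ hb1).
  apply: INR_le_nat; apply/leP; exact: depth_gen.
Qed.
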